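(* Consider the constrained multivariate linear model described in the context, with $\mathcal{B}=\mathrm{span}(\boldsymbol\beta)$, $\mathcal{U}=\mathrm{span}(\mathbf U)$ and $\mathcal{E}_{\boldsymbol\Sigma}(\mathcal{B})$ the $\boldsymbol\Sigma$-envelope of $\mathcal{B}$. If $\mathcal{B}\subseteq\mathcal{U}\subseteq\mathcal{E}_{\boldsymbol\Sigma}(\mathcal{B})$, then $$\mathrm{avar}(\sqrt{n}\,\mathrm{vec}(\widehat{\boldsymbol\beta}_{\mathrm{cm}}))\le \mathrm{avar}(\sqrt{n}\,\mathrm{vec}(\widehat{\boldsymbol\beta}_{\mathrm{em}}))$$ in the Loewner (positive semi-definite) order, where these asymptotic covariance matrices are $$\mathrm{avar}(\sqrt{n}\,\mathrm{vec}(\widehat{\boldsymbol\beta}_{\mathrm{cm}}))=\boldsymbol\Sigma_{\mathbf X}^{-1}\otimes \mathbf U(\mathbf U^T\boldsymbol\Sigma^{-1}\mathbf U)^{-1}\mathbf U^T,$$ $$\mathrm{avar}(\sqrt{n}\,\mathrm{vec}(\widehat{\boldsymbol\beta}_{\mathrm{em}}))=\boldsymbol\Sigma_{\mathbf X}^{-1}\otimes\boldsymbol\Gamma\boldsymbol\Omega\boldsymbol\Gamma^T+(\boldsymbol\eta^T\otimes\boldsymbol\Gamma_0)\,\mathbf M^{\dagger}(\boldsymbol\Sigma_{\mathbf X})\,(\boldsymbol\eta\otimes\boldsymbol\Gamma_0^T).$$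
   Context: Data: for $i=1,\dots,n$, $\mathbf Y_i=\mathbf U\boldsymbol\alpha_0+\mathbf U\boldsymbol\alpha\mathbf X_i+\boldsymbol\varepsilon_i$, where $\mathbf Y_i\in\mathbb R^r$, the predictors $\mathbf X_i\in\mathbb R^p$ are non-stochastic, $\mathbf U\in\mathbb R^{r\times k}$ is a known matrix of full column rank, $\boldsymbol\alpha_0\in\mathbb R^k$, $\boldsymbol\alpha\in\mathbb R^{k\times p}$, and the $\boldsymbol\varepsilon_i$ are i.i.d. $N(0,\boldsymbol\Sigma)$ with $\boldsymbol\Sigma>0$. Set $\boldsymbol\beta=\mathbf U\boldsymbol\alpha\in\mathbb R^{r\times p}$, $\mathcal B=\mathrm{span}(\boldsymbol\beta)$, $\mathcal U=\mathrm{span}(\mathbf U)$, and let $\boldsymbol\Sigma_{\mathbf X}$ (positive definite) be the limit of the sample covariance matrix of the $\mathbf X_i$. A subspace $\mathcal R\subseteq\mathbb R^r$ reduces the symmetric matrix $\boldsymbol\Sigma$ if $\boldsymbol\Sigma\mathcal R\subseteq\mathcal R$ (equivalently $\boldsymbol\Sigma=\mathbf P_{\mathcal R}\boldsymbol\Sigma\mathbf P_{\mathcal R}+\mathbf Q_{\mathcal R}\boldsymbol\Sigma\mathbf Q_{\mathcal R}$, with $\mathbf P_{\mathcal R}$ the orthogonal projection onto $\mathcal R$ and $\mathbf Q_{\mathcal R}=\mathbf I-\mathbf P_{\mathcal R}$). The $\boldsymbol\Sigma$-envelope $\mathcal E_{\boldsymbol\Sigma}(\mathcal B)$ is the intersection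 of all reducing subspaces of $\boldsymbol\Sigma$ containing $\mathcal B$; let $u$ be its dimension, $\boldsymbol\Gamma\in\mathbb R^{r\times u}$ a semi-orthogonal basis of it, $(\boldsymbol\Gamma,\boldsymbol\Gamma_0)$ an orthogonal matrix, $\boldsymbol\eta=\boldsymbol\Gamma^T\boldsymbol\beta$ (so $\boldsymbol\beta=\boldsymbol\Gamma\boldsymbol\eta$), $\boldsymbol\Omega=\boldsymbol\Gamma^T\boldsymbol\Sigma\boldsymbol\Gamma$, $\boldsymbol\Omega_0=\boldsymbol\Gamma_0^T\boldsymbol\Sigma\boldsymbol\Gamma_0$. For $\mathbf C\in\mathbb R^{p\times p}$, $\mathbf M(\mathbf C)=\boldsymbol\eta\mathbf C\boldsymbol\eta^T\otimes\boldsymbol\Omega_0^{-1}+\boldsymbol\Omega\otimes\boldsymbol\Omega_0^{-1}+\boldsymbol\Omega^{-1}\otimes\boldsymbol\Omega_0-2\mathbf I$, and $\dagger$ denotes the Moore–Penrose inverse. $\widehat{\boldsymbol\beta}_{\mathrm{cm}}$ is the maximum likelihood estimator of $\boldsymbol\beta$ under the constrained model above (with $\mathbf U$ known), and $\widehat{\boldsymbol\beta}_{\mathrm{em}}$ is the maximum likelihood estimator of $\boldsymbol\beta$ under the unconstrained envelope model $\mathbf Y_i=\boldsymbol\beta_0+\boldsymbol\Gamma\boldsymbol\eta\mathbf X_i+\boldsymbol\varepsilon_i$, $\boldsymbol\Sigma=\boldsymbol\Gamma\boldsymbol\Omega\boldsymbol\Gamma^T+\boldsymbol\Gamma_0\boldsymbol\Omega_0\boldsymbol\Gamma_0^T$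 (with $\boldsymbol\Gamma$ unknown, $u$ known, and no use of $\mathbf U$); $\sqrt n\,\mathrm{vec}(\widehat{\boldsymbol\beta}-\boldsymbol\beta)$ is asymptotically normal with mean 0 and the displayed covariance matrices, denoted $\mathrm{avar}(\cdot)$. *)

(* Defs.v *)
(* Matrices over an abstract R : realType.
   Kronecker product: mathcomp-real-closed's [tensmx] (notation A *t B),
   the standard Kronecker product (block (i,k) of A *t B is A i k *: B). *)
From HB Require Import structures.
From mathcomp Require Import all_boot all_order all_algebra.
From mathcomp Require Import mxtens.
From mathcomp Require Import reals.
Set Implicit Arguments.
Unset Strict Implicit.
Unset Printing Implicit Defensive.
Import Order.TTheory GRing.Theory Num.Theory.
Local Open Scope ring_scope.

(* Subspaces of R^r are represented (MathComp convention) by the row space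
   of a matrix; the column space span(A) of A : 'M_(r,c) is the row space
   of A^T. *)

Section Defs.
Variable R : realType.

Definition posdef {n} (A : 'M[R]_n) : Prop :=
  A^T = A /\ forall x : 'cV[R]_n, x != 0 -> 0 < (x^T *m A *m x) 0 0.

Definition possemidef {n} (A : 'M[R]_n) : Prop :=
  A^T = A /\ forall x : 'cV[R]_n, 0 <= (x^T *m A *m x) 0 0.

Definition loewner_le {n} (A B : 'M[R]_n) : Prop := possemidef (B - A).

(* the subspace (row space of) S reduces the symmetric matrix Sigma:
   Sigma S ⊆ S (for row vectors v in S, the vector Sigma v is v Sigma^T
   = v Sigma by symmetry) *)
Definition reduces {r} (Sigma S : 'M[R]_r) : Prop := (S *m Sigma <= S)%MS.

Definition is_envelope {r m k} (Sigma : 'M[R]_r) (B : 'M[R]_(m, r))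
    (E : 'M[R]_(k, r)) : Prop :=
  forall v : 'rV[R]_r, (v <= E)%MS <->
    (forall S : 'M[R]_r, reduces Sigma S -> (B <= S)%MS -> (v <= S)%MS).

Definition moore_penrose {m n} (M : 'M[R]_(m, n)) (Md : 'M[R]_(n, m)) : Prop :=
  [/\ M *m Md *m M = M, Md *m M *m Md = Md,
      (M *m Md)^T = M *m Md & (Md *m M)^T = Md *m M].

Definition Mmat {u v p} (eta : 'M[R]_(u, p)) (Omega : 'M[R]_u)
    (Omega0 : 'M[R]_v) (C : 'M[R]_p) : 'M[R]_(u * v) :=
  (eta *m C *m eta^T) *t invmx Omega0 + Omega *t invmx Omega0
  + invmx Omega *t Omega0 - 2%:M.

Definition avar_cm {r k p} (SigmaX : 'M[R]_p) (Sigma : 'M[R]_r)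
    (U : 'M[R]_(r, k)) : 'M[R]_(p * r) :=
  invmx SigmaX *t (U *m invmx (U^T *m invmx Sigma *m U) *m U^T).

Definition avar_em {r u v p} (SigmaX : 'M[R]_p) (Gamma : 'M[R]_(r, u))
    (Gamma0 : 'M[R]_(r, v)) (eta : 'M[R]_(u, p)) (Omega : 'M[R]_u)
    (Md : 'M[R]_(u * v)) : 'M[R]_(p * r) :=
  invmx SigmaX *t (Gamma *m Omega *m Gamma^T)
  + (eta^T *t Gamma0) *m Md *m (eta *t Gamma0^T).

End Defs.

(* Main.v *)
Require Import Defs.
From HB Require Import structures.
From mathcomp Require Import all_boot all_order all_algebra.
From mathcomp Require Import mxtens.
From mathcomp Require Import reals.
From mathcomp.algebra_tactics Require Import ring lra.
From mathcomp Require Import zify.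
Import Order.TTheory GRing.Theory Num.Theory.
Local Open Scope ring_scope.
Set Implicit Arguments.
Unset Strict Implicit.
Unset Printing Implicit Defensive.

Section Helpers.
Variable R : realType.

Lemma qfE n (x y : 'cV[R]_n) (A : 'M[R]_n) :
  (x^T *m A *m y) 0 0 = \sum_j \sum_i x i 0 * A i j * y j 0.
Proof.
rewrite mxE; apply: eq_bigr => j _; rewrite mxE big_distrl /=.
by apply: eq_bigr => i _; rewrite !mxE.
Qed.

Lemma psd_gram n m (L : 'M[R]_(n, m)) : possemidef (L *m L^T).
Proof.
split; first by rewrite trmx_mul trmxK.
move=> x; have -> : x^T *m (L *m L^T) *m x = (L^T *m x)^T *m (L^T *m x).
  by rewrite trmx_mul trmxK !mulmxA.
set y := L^T *m x.
rewrite mxE; apply: sumr_ge0 => j _; rewrite !mxE -expr2; exact: sqr_ge0.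
Qed.

Lemma psd_cong n m (A : 'M[R]_n) (N : 'M[R]_(m, n)) :
  possemidef A -> possemidef (N *m A *m N^T).
Proof.
case=> sA pA; split; first by rewrite !trmx_mul trmxK sA mulmxA.
move=> x; have := pA (N^T *m x).
by rewrite trmx_mul trmxK !mulmxA.
Qed.

Lemma psd_add n (A B : 'M[R]_n) :
  possemidef A -> possemidef B -> possemidef (A + B).
Proof.
case=> sA pA [sB pB]; split; first by rewrite linearD /= sA sB.
move=> x; rewrite mulmxDr mulmxDl mxE; exact: addr_ge0.
Qed.

Lemma pd_psd n (A : 'M[R]_n) : posdef A -> possemidef A.
Proof.
case=> sA pA; split=> // x; have [->|nz] := eqVneq x 0.
  by rewrite mulmx0 mxE.
exact: ltW (pA x nz).
Qed.

Lemma pd_unit n (A : 'M[R]_n) : posdef A -> A \in unitmx.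
Proof.
case=> sA pA; rewrite -row_free_unit -kermx_eq0; apply/eqP/row_matrixP => i.
rewrite row0; apply/eqP/negPn/negP => nz.
have : (row i (kermx A))^T != 0 by rewrite -trmx0 (inj_eq (@trmx_inj _ _ _)).
move/pA; rewrite trmxK -row_mul mulmx_ker row0 mul0mx mxE ltxx //.
Qed.

Lemma pd_inv n (A : 'M[R]_n) : posdef A -> posdef (invmx A).
Proof.
move=> pdA; have uA := pd_unit pdA; case: pdA => sA pA.
split; first by rewrite trmx_inv sA.
move=> x nz; set y := invmx A *m x.
have xE : x = A *m y by rewrite /y mulmxA mulmxV ?mul1mx.
have ynz : y != 0.
  by apply: contraNneq nz => y0; rewrite xE y0 mulmx0.
have -> : x^T *m invmx A *m x = y^T *m A *m y.
  rewrite {1}xE trmx_mul sA -!mulmxA (mulmxA A) mulmxV // mul1mx.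
exact: pA.
Qed.

Lemma pd_cong n m (A : 'M[R]_n) (N : 'M[R]_(n, m)) :
  posdef A -> N^T *m N = 1%:M -> posdef (N^T *m A *m N).
Proof.
case=> sA pA NN; split; first by rewrite !trmx_mul trmxK sA mulmxA.
move=> x nz; have Nx : N *m x != 0.
  by apply: contraNneq nz => h; rewrite -[x]mul1mx -NN -mulmxA h mulmx0.
by have := pA _ Nx; rewrite trmx_mul !mulmxA.
Qed.


Lemma trmxD m n (A B : 'M[R]_(m, n)) : (A + B)^T = A^T + B^T.
Proof. by apply/matrixP => i j; rewrite !mxE. Qed.
Lemma trmxN m n (A : 'M[R]_(m, n)) : (- A)^T = - A^T.
Proof. by apply/matrixP => i j; rewrite !mxE. Qed.
Lemma trmxB m n (A B : 'M[R]_(m, n)) : (A - B)^T = A^T - B^T.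
Proof. by rewrite trmxD trmxN. Qed.
Lemma trmxZ m n a (A : 'M[R]_(m, n)) : (a *: A)^T = a *: A^T.
Proof. by apply/matrixP => i j; rewrite !mxE. Qed.

Lemma oppmxE m n (M : 'M[R]_(m, n)) i j : (- M) i j = - M i j.
Proof. by rewrite mxE. Qed.

Definition qf n (A : 'M[R]_n) (x y : 'cV[R]_n) := (x^T *m A *m y) 0 0.

Lemma qf_lin n (A : 'M[R]_n) (x y : 'cV[R]_n) a b :
  qf A (a *: x + b *: y) (a *: x + b *: y) =
  a ^+ 2 * qf A x x + a * b * (qf A x y + qf A y x) + b ^+ 2 * qf A y y.
Proof.
rewrite /qf trmxD !trmxZ !mulmxDl !mulmxDr.
rewrite -!scalemxAl -!scalemxAr.
move: (x^T *m A *m x) (x^T *m A *m y) (y^T *m A *m x) (y^T *m A *m y).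
move=> M1 M2 M3 M4; rewrite !mxE; ring.
Qed.

Lemma qf_sym n (A : 'M[R]_n) x y : A^T = A -> qf A x y = qf A y x.
Proof.
move=> sA; have h : forall M : 'M[R]_1, M 0 0 = M^T 0 0 by move=> M; rewrite mxE.
by rewrite /qf h !trmx_mul trmxK sA mulmxA.
Qed.

Lemma qf_delta n (A : 'M[R]_n) i j :
  qf A (delta_mx i 0) (delta_mx j 0) = A i j.
Proof. by rewrite /qf trmx_delta -rowE -colE !mxE. Qed.

Lemma psd_diag0 n (A : 'M[R]_n) i j :
  possemidef A -> A i i = 0 -> A i j = 0.
Proof.
case=> sA pA aii.
have Aji : A j i = A i j by rewrite -{1}sA mxE.
set d := A j j; set c := A i j.
have d0 : 0 <= d by rewrite /d -qf_delta; exact: pA.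
have := pA ((d + 1) *: delta_mx i 0 + (- c) *: delta_mx j 0).
rewrite -/(qf _ _ _) qf_lin !qf_delta aii Aji -/d -/c => h.
nra.
Qed.

Lemma psd_zero n (A : 'M[R]_n) :
  possemidef A -> (forall i, A i i = 0) -> A = 0.
Proof.
move=> pA h; apply/matrixP => i j; rewrite mxE; exact: psd_diag0 (h i).
Qed.


Lemma psd_factor n (A : 'M[R]_n) :
  possemidef A -> exists m (L : 'M[R]_(n, m)), A = L *m L^T.
Proof.
move: {2}#|[set i | A i i != 0]| (leqnn #|[set i | A i i != 0]|) => c.
elim: c A => [|c IH] A cle psdA.
  exists 0%N, 0; rewrite mul0mx; apply: psd_zero => // i.
  apply/eqP/negPn/negP => nz; move: cle; rewrite leqn0 cards_eq0.
  by move=> /eqP/setP/(_ i); rewrite !inE nz.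
have [e0|/set0Pn[i]] := eqVneq [set i | A i i != 0] set0.
  exists 0%N, 0; rewrite mul0mx; apply: psd_zero => // j.
  by apply/eqP/negPn/negP => nz; move/setP: e0 => /(_ j); rewrite !inE nz.
rewrite inE => nzi.
have sA := psdA.1.
set a := A i i.
have a0 : 0 < a.
  by rewrite lt_def nzi /a -qf_delta; apply: psdA.2.
set s := Num.sqrt a.
have ss : s ^+ 2 = a by rewrite sqr_sqrtr // ltW.
have s0 : s != 0 by rewrite lt0r_neq0 // sqrtr_gt0.
set v := s^-1 *: col i A.
have vvE : forall j k, (v *m v^T) j k = A j i * A k i / a.
  move=> j k; rewrite mxE big_ord1 !mxE -ss; field; exact: s0.
set A' := A - v *m v^T.
have A'E : forall j k, A' j k = A j k - A j i * A k i / a.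
  by move=> j k; rewrite !mxE -vvE mxE.
have psdA' : possemidef A'.
  split.
    by rewrite /A' trmxB trmx_mul trmxK sA.
  move=> x; set t := qf A x (delta_mx i 0).
  have := psdA.2 (1 *: x + (- (t / a)) *: delta_mx i 0).
  rewrite -/(qf _ _ _) qf_lin (qf_sym (delta_mx i 0) x sA) -/t qf_delta -/a => h.
  have -> : (x^T *m A' *m x) 0 0 = qf A x x - t ^+ 2 / a.
    rewrite /A' mulmxBr mulmxBl mxE oppmxE; congr (_ - _).
    rewrite mulmxA -mulmxA mxE big_ord1.
    have e1 : (x^T *m v) 0 0 = s^-1 * t.
      by rewrite /v -scalemxAr mxE colE mulmxA.
    have e2 : (v^T *m x) 0 0 = s^-1 * t.
      by rewrite -e1 -[x^T *m v]trmxK trmx_mul trmxK [RHS]mxE.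
    rewrite e1 e2 -ss; field; exact: s0.
  have ane : a != 0 by exact: lt0r_neq0.
  move: h; set q := qf A x x.
  have -> : 1 ^+ 2 * q + 1 * - (t / a) * (t + t) + (- (t / a)) ^+ 2 * a
            = q - t ^+ 2 / a by field.
  done.
have cA' : (#|[set j | A' j j != 0%R]| <= c)%N.
  have sub : [set j | A' j j != 0] \subset [set j | A j j != 0] :\ i.
    apply/subsetP => j; rewrite !inE A'E => nz; apply/andP; split.
      apply: contraNneq nz => ->; rewrite -/a mulfK ?subrr //; exact: lt0r_neq0.
    apply: contraNneq nz => e.
    by rewrite e (psd_diag0 i psdA e) !mul0r subrr.
  apply: (leq_trans (subset_leq_card sub)).
  have := cardsD1 i [set j | A j j != 0%R]; rewrite inE nzi /=.
  by move=> h2; move: cle; rewrite h2 add1n ltnS.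
have [m [L LE]] := IH A' cA' psdA'.
exists (m + 1)%N, (row_mx L v).
by rewrite tr_row_mx mul_row_col -LE /A' subrK.
Qed.


Lemma tensmxDr m n p q (A : 'M[R]_(m, n)) (B C : 'M[R]_(p, q)) :
  A *t (B + C) = A *t B + A *t C.
Proof. by apply/matrixP => i j; rewrite /tensmx !mxE mulrDr. Qed.
Lemma tensmxDl m n p q (A B : 'M[R]_(m, n)) (C : 'M[R]_(p, q)) :
  (A + B) *t C = A *t C + B *t C.
Proof. by apply/matrixP => i j; rewrite /tensmx !mxE mulrDl. Qed.
Lemma tensmxNr m n p q (A : 'M[R]_(m, n)) (B : 'M[R]_(p, q)) :
  A *t (- B) = - (A *t B).
Proof. by apply/matrixP => i j; rewrite /tensmx !mxE mulrN. Qed.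
Lemma tensmxBr m n p q (A : 'M[R]_(m, n)) (B C : 'M[R]_(p, q)) :
  A *t (B - C) = A *t B - A *t C.
Proof. by rewrite tensmxDr tensmxNr. Qed.

Lemma tens11 m n : (1%:M : 'M[R]_m) *t (1%:M : 'M[R]_n) = 1%:M.
Proof.
apply/matrixP => i j.
case: (mxtens_indexP i) => i1 i2; case: (mxtens_indexP j) => j1 j2.
rewrite tensmxE !mxE (inj_eq (can_inj (@mxtens_indexK m n))) xpair_eqE.
by rewrite -natrM mulnb.
Qed.

Lemma psd_tens m n (A : 'M[R]_m) (B : 'M[R]_n) :
  possemidef A -> possemidef B -> possemidef (A *t B).
Proof.
move=> /psd_factor [a [L ->]] /psd_factor [b [K ->]].
by rewrite -tensmx_mul -trmx_tens; exact: psd_gram.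
Qed.


Lemma mp_unique m n (M : 'M[R]_(m, n)) X Y :
  moore_penrose M X -> moore_penrose M Y -> X = Y.
Proof.
case=> X1 X2 X3 X4 [Y1 Y2 Y3 Y4].
have eXM : X *m M = Y *m M.
  have e : X *m M = (X *m M) *m (Y *m M) by rewrite !mulmxA -{1}Y1 ?mulmxA.
  rewrite e -X4 -Y4 -trmx_mul.
  have -> : Y *m M *m (X *m M) = Y *m (M *m X *m M) by rewrite !mulmxA.
  by rewrite X1 Y4.
have eMX : M *m X = M *m Y.
  have e : M *m X = (M *m Y) *m (M *m X) by rewrite !mulmxA -{1}Y1 ?mulmxA.
  rewrite e -X3 -Y3 -trmx_mul.
  have -> : M *m X *m (M *m Y) = (M *m X *m M) *m Y by rewrite !mulmxA.
  by rewrite X1 Y3.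
by rewrite -X2 eXM -mulmxA eMX mulmxA Y2.
Qed.

Lemma mp_sym m (M Md : 'M[R]_m) :
  M^T = M -> moore_penrose M Md -> Md^T = Md.
Proof.
move=> sM mp; apply: (mp_unique _ mp); case: mp => h1 h2 h3 h4.
split.
- by apply: trmx_inj; rewrite !trmx_mul trmxK sM mulmxA h1.
- by apply: trmx_inj; rewrite !trmx_mul trmxK sM mulmxA h2.
- by rewrite trmx_mul trmxK sM -h4 trmx_mul sM.
- by rewrite trmx_mul trmxK sM -h3 trmx_mul sM.
Qed.

End Helpers.

Theorem proposition1 (R : realType) (r k p u v : nat)
    (Sigma : 'M[R]_r) (SigmaX : 'M[R]_p)
    (U : 'M[R]_(r, k)) (alpha : 'M[R]_(k, p))
    (Gamma : 'M[R]_(r, u)) (Gamma0 : 'M[R]_(r, v))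
    (Md : 'M[R]_(u * v)) :
  posdef Sigma -> posdef SigmaX ->
  \rank U = k ->
  (* (Gamma, Gamma0) is an orthogonal matrix *)
  Gamma^T *m Gamma = 1%:M -> Gamma0^T *m Gamma0 = 1%:M ->
  Gamma^T *m Gamma0 = 0 ->
  Gamma *m Gamma^T + Gamma0 *m Gamma0^T = 1%:M ->
  (* span(Gamma) is the Sigma-envelope of B = span(beta), beta = U alpha *)
  is_envelope Sigma (U *m alpha)^T Gamma^T ->
  (* B ⊆ U ⊆ E_Sigma(B) *)
  ((U *m alpha)^T <= U^T)%MS -> (U^T <= Gamma^T)%MS ->
  let beta := U *m alpha in
  let eta := Gamma^T *m beta in
  let Omega := Gamma^T *m Sigma *m Gamma in
  let Omega0 := Gamma0^T *m Sigma *m Gamma0 in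
  moore_penrose (Mmat eta Omega Omega0 SigmaX) Md ->
  loewner_le (avar_cm SigmaX Sigma U)
             (avar_em SigmaX Gamma Gamma0 eta Omega Md).
Proof.
move=> sPD xPD rkU GG G0G0 GG0 GGT _ _ UG beta eta Omega Omega0 mp.
have uS := pd_unit sPD.
have sS : Sigma^T = Sigma := sPD.1.
set Si := invmx Sigma.
have siPD : posdef Si := pd_inv sPD.
have sSi : Si^T = Si := siPD.1.
have SXi_psd : possemidef (invmx SigmaX) := pd_psd (pd_inv xPD).
have SX_psd : possemidef SigmaX := pd_psd xPD.
set W := U^T *m Si *m U.
have WPD : posdef W.
  split; first by rewrite /W !trmx_mul trmxK sSi mulmxA.
  have /row_fullP [B BU] : row_full U by rewrite /row_full rkU.
  move=> x nz; have Ux : U *m x != 0.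
    by apply: contraNneq nz => h; rewrite -[x]mul1mx -BU -mulmxA h mulmx0.
  have := siPD.2 _ Ux; by rewrite /W trmx_mul !mulmxA.
have uW := pd_unit WPD.
have sW : W^T = W := WPD.1.
set Q := U *m invmx W *m U^T.
have sQ : Q^T = Q by rewrite /Q !trmx_mul trmxK trmx_inv sW mulmxA.
set P := Gamma *m Gamma^T.
have sP : P^T = P by rewrite /P trmx_mul trmxK.
have [D UD] := submxP UG.
have PU : P *m U = U.
  by rewrite -[U]trmxK UD trmx_mul trmxK /P -mulmxA (mulmxA _ Gamma) GG mul1mx.
have UP : U^T *m P = U^T by rewrite -sP -trmx_mul PU.
have PQ : P *m Q = Q by rewrite /Q !mulmxA PU.
have QP : Q *m P = Q by rewrite /Q -!mulmxA UP.
have QSiQ : Q *m Si *m Q = Q.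
  rewrite /Q.
  have -> : U *m invmx W *m U^T *m Si *m (U *m invmx W *m U^T)
     = U *m invmx W *m W *m invmx W *m U^T by rewrite /W !mulmxA.
  by rewrite -(mulmxA U) mulVmx // mulmx1.
have GQ : possemidef (Gamma *m Omega *m Gamma^T - Q).
  have -> : Gamma *m Omega *m Gamma^T - Q
     = (P - Q *m Si) *m Sigma *m (P - Q *m Si)^T.
    rewrite trmxB [(Q *m Si)^T]trmx_mul sQ sSi sP.
    rewrite mulmxBl mulmxBr !mulmxBl.
    have SiS : Si *m Sigma = 1%:M by rewrite mulVmx.
    have SSi : Sigma *m Si = 1%:M by rewrite mulmxV.
    have e1 : Q *m Si *m Sigma *m P = Q by rewrite -(mulmxA Q Si) SiS mulmx1 QP.
    have e2 : P *m Sigma *m (Si *m Q) = Q.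
      by rewrite mulmxA -(mulmxA P Sigma) SSi mulmx1 PQ.
    have e3 : Q *m Si *m Sigma *m (Si *m Q) = Q.
      by rewrite -(mulmxA Q Si) SiS mulmx1 mulmxA QSiQ.
    rewrite e1 e2 e3 subrr subr0.
    by rewrite /P /Omega !mulmxA.
  exact: psd_cong (pd_psd sPD).
have OmPD : posdef Omega := pd_cong sPD GG.
have O0PD : posdef Omega0 := pd_cong sPD G0G0.
have uOm := pd_unit OmPD.
have uO0 := pd_unit O0PD.
set Mm := Mmat eta Omega Omega0 SigmaX.
have M_psd : possemidef Mm.
  rewrite /Mm /Mmat.
  set Pm := Omega *t invmx Omega0.
  set Pi := invmx Omega *t Omega0.
  have sPm : (Pm - 1%:M)^T = Pm - 1%:M.
    by rewrite trmxB trmx_tens trmx_inv OmPD.1 O0PD.1 trmx1.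
  have PmPi : Pm *m Pi = 1%:M by rewrite tensmx_mul mulmxV // mulVmx // tens11.
  have PiPm : Pi *m Pm = 1%:M by rewrite tensmx_mul mulVmx // mulmxV // tens11.
  have two : (2%:M : 'M[R]_(u * v)) = 1%:M + 1%:M.
    by apply/matrixP => i j; rewrite !mxE; case: (i == j) => /=; ring.
  have -> : (eta *m SigmaX *m eta^T) *t invmx Omega0 + Pm + Pi - 2%:M
     = (eta *m SigmaX *m eta^T) *t invmx Omega0 + (Pm - 1%:M) *m Pi *m (Pm - 1%:M)^T.
    rewrite sPm mulmxBl mul1mx PmPi mulmxBl !mulmxBr PiPm !mulmx1 two.
    rewrite mul1mx opprB opprD !addrA; congr (_ + _).
    by rewrite addrAC.
  apply: psd_add.
    apply: psd_tens; [exact: psd_cong | exact: pd_psd (pd_inv O0PD)].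
  apply: psd_cong; apply: psd_tens; [exact: pd_psd (pd_inv OmPD) | exact: pd_psd O0PD].
have sM : Mm^T = Mm := M_psd.1.
have sMd := mp_sym sM mp.
have Md_psd : possemidef Md.
  have -> : Md = Md *m Mm *m Md^T by rewrite sMd; case: mp.
  exact: psd_cong.
rewrite /loewner_le /avar_em /avar_cm -/Si -/W -/Q.
rewrite addrAC -tensmxBr.
apply: psd_add; first exact: psd_tens.
have -> : eta *t Gamma0^T = (eta^T *t Gamma0)^T by rewrite trmx_tens trmxK.
exact: psd_cong.
Qed.
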